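(* Let $n,l$ be positive integers and $p$ a prime such that $p^l$ divides $n$ but $p^{l+1}$ does not divide $n$. Let $S\subseteq\mathbb{Z}_n$ with $0\notin S$, $S=-S$, $|S|=p^l$, such that the circulant graph $\mathrm{Cay}(\mathbb{Z}_n,S)$ is connected. Then $\mathrm{Cay}(\mathbb{Z}_n,S)$ admits a total perfect code if and only if $s\not\equiv s' \pmod{p^l}$ for all distinct $s,s'\in S$.
   Context: $\mathbb{Z}_n$ is the additive group of integers modulo $n$; elements are identified with integers in $\{0,1,\dots,n-1\}$. For an inverse-closed subset $S$ of $\mathbb{Z}_n$ not containing $0$, the circulant graph $\mathrm{Cay}(\mathbb{Z}_n,S)$ has vertex set $\mathbb{Z}_n$, with $u,v$ adjacent iff $v-u\in S$; its degree is $|S|$. A total perfect code in a graph $\Gamma=(V,E)$ is a subset $C\subseteq V$ such that every vertex of $V$ has exactly one neighbour in $C$. *)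

(* Defs.v *)
From mathcomp Require Import all_boot.
Set Implicit Arguments. Unset Strict Implicit. Unset Printing Implicit Defensive.

(* Z_n is modelled by 'I_n with arithmetic modulo n on natural representatives. *)
Definition zsub (n : nat) (v u : 'I_n) : nat := (v + (n - u)) %% n.
Definition zopp (n : nat) (s : 'I_n) : nat := (n - s) %% n.

Definition inv_closed (n : nat) (S : {set 'I_n}) : Prop :=
  forall s : 'I_n, s \in S -> exists2 t : 'I_n, t \in S & val t = zopp s.

Definition cay_adj (n : nat) (S : {set 'I_n}) : rel 'I_n :=
  fun u v => [exists s in S, val s == zsub v u].

Definition cay_connected (n : nat) (S : {set 'I_n}) : Prop :=
  forall u v : 'I_n, connect (cay_adj S) u v.

Definition total_perfect_code (n : nat) (S : {set 'I_n}) (C : {set 'I_n}) : Prop :=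
  forall v : 'I_n, #|[set c in C | cay_adj S v c]| = 1.

(* Main.v *)
Require Import Defs.
From mathcomp Require Import all_boot all_order all_algebra all_fingroup all_solvable.
Set Implicit Arguments. Unset Strict Implicit. Unset Printing Implicit Defensive.
Import GRing.Theory.

Section Act.
Variables (q : nat) (T : finType).
Definition fact (f : {ffun 'I_q -> T}) (g : {perm 'I_q}) : {ffun 'I_q -> T} :=
  [ffun i => f ((g^-1)%g i)].
Lemma fact1 : fact^~ 1%g =1 id.
Proof. by move=> f; apply/ffunP => i; rewrite ffunE invg1 perm1. Qed.
Lemma factM f : act_morph fact f.
Proof. by move=> a b; apply/ffunP => i; rewrite !ffunE invMg permM. Qed.
Definition factA := TotalAction fact1 factM.
End Act.

Definition tau (k : nat) : {perm 'I_k.+1} := perm (@ordS_inj k.+1).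

Lemma tauX k (i : 'I_k.+1) j : val (((tau k) ^+ j)%g i) = (i + j) %% k.+1.
Proof.
elim: j => [|j IH]; first by rewrite expg0 perm1 addn0 modn_small.
by rewrite expgSr permM permE /= IH addnS -addn1 modnDml addn1.
Qed.

Lemma tau_pgroup p k : prime p -> p.-nat k.+1 -> (p.-group <[tau k]>)%g.
Proof.
move=> pp pk; rewrite /pgroup -orderE; apply: pnat_dvd pk.
rewrite order_dvdn; apply/eqP/permP => i; rewrite perm1; apply/val_inj.
by rewrite tauX modnDr modn_small.
Qed.

Definition tiling (N : nat) (C S : {set 'I_N.+1}) :=
  forall v : 'I_N.+1, exists2 c, c \in C &
    ((c - v)%R \in S) /\ (forall c', c' \in C -> (c' - v)%R \in S -> c' = c).

Lemma fix_count (N k p : nat) (C S : {set 'I_N.+1}) (g : 'I_N.+1) :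
  prime p -> p.-nat k.+1 -> tiling C S ->
  ~~ (p %| #|C|) -> exists2 c, c \in C & (c *+ k.+1 - g)%R \in S.
Proof.
move=> pp pk tC pm.
pose X := [set f : {ffun 'I_k.+1 -> 'I_N.+1} |
   [forall i, f i \in C] && ((\sum_i f i - g)%R \in S)].
have sumE (f : {ffun 'I_k.+1 -> 'I_N.+1}) :
    (\sum_i f i = \sum_(j < k) f (lift ord_max j) + f ord_max)%R.
  rewrite big_ord_recr /=; congr (_ + _)%R; apply: eq_bigr => j _.
  by congr (f _); apply/val_inj; rewrite /= /bump leqNgt ltn_ord.
have keyE (r x : 'I_N.+1) : ((r + x - g) = x - (g - r))%R.
  by rewrite opprB addrA (addrC r).
pose res (f : {ffun 'I_k.+1 -> 'I_N.+1}) : {ffun 'I_k -> 'I_N.+1} := [ffun j => f (lift ord_max j)].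
have cardX : #|X| = #|C| ^ k.
  rewrite -(card_in_imset (f := res)); last first.
    move=> f1 f2; rewrite !inE => /andP[/forallP C1 S1] /andP[/forallP C2 S2] E.
    have E' j : f1 (lift ord_max j) = f2 (lift ord_max j).
      by have := congr1 (fun h : {ffun 'I_k -> 'I_N.+1} => h j) E; rewrite /= !ffunE.
    apply/ffunP => i; case: (unliftP ord_max i) => [j ->|->]; first exact: E'.
    move: S1 S2; rewrite !sumE (eq_bigr _ (fun j _ => E' j)) !keyE => S1 S2.
    have [c _ [_ U]] := tC (g - \sum_(j < k) f2 (lift ord_max j))%R.
    by rewrite (U _ (C1 _) S1) (U _ (C2 _) S2).
  transitivity #|@ffun_on_mem 'I_k 'I_N.+1 (mem C)|; last by rewrite card_ffun_on card_ord.
  apply: eq_card => h.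
  apply/imsetP/ffun_onP => [[f] |hC].
    by rewrite inE => /andP[/forallP fC _] -> j; rewrite ffunE.
  have [c cC [cS _]] := tC (g - \sum_(j < k) h j)%R.
  exists [ffun i => if unlift ord_max i is Some j then h j else c].
    rewrite inE; apply/andP; split.
      by apply/forallP => i; rewrite ffunE; case: (unlift _ _).
    rewrite sumE ffunE unlift_none keyE.
    by under eq_bigr => j _ do rewrite ffunE liftK.
  by apply/ffunP => j; rewrite !ffunE liftK.
have actsX : [acts <[tau k]>%G, on X | factA k.+1 'I_N.+1].
  apply/actsP => a _ f; rewrite !inE /=.
  have -> : (\sum_i fact f a i = \sum_i f i)%R.
    rewrite (reindex_inj (@perm_inj _ a)); apply: eq_bigr => i _.
    by rewrite ffunE permK.
  congr (_ && _); apply/forallP/forallP => H i.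
    by have := H (a i); rewrite ffunE permK.
  by rewrite ffunE.
have := pgroup_fix_mod (tau_pgroup pp pk) actsX.
case: (set_0Vmem ('Fix_(X | factA k.+1 'I_N.+1)(<[tau k]>))%g) => [->|[f Hf]] Hm.
  move: Hm; rewrite cards0 cardX mod0n => H.
  have : p %| #|C| ^ k by rewrite /dvdn H.
  by rewrite Euclid_dvdX // (negbTE pm).
move: Hf; rewrite inE afix_cycle => /andP[fX /afix1P fF].
have fS (j : 'I_k.+1) : f (tau k j) = f j.
  have := congr1 (fun h : {ffun 'I_k.+1 -> 'I_N.+1} => h (tau k j)) fF.
  by rewrite /= ffunE permK.
have fX' (j : nat) (i : 'I_k.+1) : f (((tau k) ^+ j)%g i) = f i.
  elim: j => [|j IH]; first by rewrite expg0 perm1.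
  by rewrite expgSr permM fS.
have fc (i : 'I_k.+1) : f i = f ord0.
  rewrite -(fX' i ord0); congr (f _); apply/val_inj.
  by rewrite tauX add0n modn_small.
move: fX; rewrite inE => /andP[/forallP fC fSum].
exists (f ord0) => //.
move: fSum; rewrite (eq_bigr _ (fun i _ => fc i)) sumr_const card_ord.
by [].
Qed.

Lemma zsubE N (v u : 'I_N.+1) : zsub v u = val (v - u)%R.
Proof. by rewrite /zsub /= modnDmr. Qed.

Lemma adjE N (S : {set 'I_N.+1}) v c : cay_adj S v c = ((c - v)%R \in S).
Proof.
rewrite /cay_adj zsubE; apply/existsP/idP => [[s /andP[sS /eqP E]]|H].
  by rewrite -(val_inj E).
by exists (c - v)%R; rewrite H eqxx.
Qed.

Lemma dvd_modN q N x : q %| N -> (q %| x %% N) = (q %| x).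
Proof. by move=> H; rewrite /dvdn modn_dvdm. Qed.

Lemma tpc_tiling N (S C : {set 'I_N.+1}) : total_perfect_code S C -> tiling C S.
Proof.
move=> T v; have /cards1P[x Ex] : #|[set c in C | cay_adj S v c]| == 1 by rewrite T.
have : x \in [set c in C | cay_adj S v c] by rewrite Ex set11.
rewrite inE adjE => /andP[xC xS]; exists x => //; split => // c' c'C c'S.
have : c' \in [set c in C | cay_adj S v c] by rewrite inE adjE c'C.
by rewrite Ex => /set1P.
Qed.

Lemma valD N (a b : 'I_N.+1) : val (a + b)%R = (val a + val b) %% N.+1.
Proof. by []. Qed.

Lemma backward N k (S : {set 'I_N.+1}) :
  k.+1 %| N.+1 -> #|S| = k.+1 ->
  (forall s s' : 'I_N.+1, s \in S -> s' \in S -> s != s' -> val s <> val s' %[mod k.+1]) ->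
  exists C : {set 'I_N.+1}, total_perfect_code S C.
Proof.
move=> qN cS H.
pose rho (s : 'I_N.+1) : 'I_k.+1 := inZp (val s).
have rinj : {in S &, injective rho}.
  move=> s s' sS s'S /(congr1 val) /= E.
  by case: (eqVneq s s') => // /(H _ _ sS s'S).
have rS : rho @: S = setT.
  apply/eqP; rewrite eqEcard subsetT /= cardsT card_ord card_in_imset // cS.
  by [].
exists [set c : 'I_N.+1 | k.+1 %| val c] => v.
have : inZp (N.+1 - v) \in rho @: S by rewrite rS inE.
case/imsetP => s sS /(congr1 val) /= Es.
have qvs : k.+1 %| v + s.
  rewrite /dvdn -modnDmr -Es modnDmr subnKC ?(ltnW (ltn_ord v)) //.
apply/eqP/cards1P; exists (v + s)%R; apply/setP => c; rewrite !inE adjE.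
apply/andP/eqP => [[qc cS']|->]; last first.
  rewrite valD dvd_modN // qvs /=.
  by split => //; rewrite (addrC v s) addrK.
have Ec : c = (v + (c - v))%R by rewrite addrC subrK.
suff : (c - v)%R = s by move=> <-.
case: (eqVneq (c - v)%R s) => // ne; exfalso.
apply: (H _ _ cS' sS ne).
move: qc; rewrite {1}Ec valD dvd_modN // => qc.
apply/eqP; rewrite -(eqn_modDl v).
by move: qc qvs; rewrite /dvdn => /eqP -> /eqP ->.
Qed.

Lemma forward N k p l (S C : {set 'I_N.+1}) :
  prime p -> k.+1 = p ^ l -> k.+1 %| N.+1 -> ~~ (p ^ l.+1 %| N.+1) ->
  #|S| = k.+1 -> tiling C S ->
  forall s s' : 'I_N.+1, s \in S -> s' \in S -> s != s' -> val s <> val s' %[mod k.+1].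
Proof.
move=> pp qE qN pN cS tC.
set m := #|C|.
have cardCS : m * k.+1 = N.+1.
  rewrite -cS -cardsX.
  rewrite -(card_in_imset (f := fun cs : 'I_N.+1 * 'I_N.+1 => (cs.1 - cs.2)%R)).
    have -> : [set (cs.1 - cs.2)%R | cs in setX C S] = setT.
      apply/setP => v; rewrite inE; have [c cC [cv _]] := tC v.
      by apply/imsetP; exists (c, (c - v)%R); rewrite ?inE ?cC //= opprB addrC subrK.
    by rewrite cardsT card_ord.
  move=> [c s] [c' s']; rewrite !inE /= => /andP[cC sS] /andP[c'C s'S] E.
  have [c0 _ [_ U]] := tC (c - s)%R.
  have e1 : c = c0 by apply: U => //; rewrite opprB addrC subrK.
  have e2 : c' = c0 by apply: U => //; rewrite E opprB addrC subrK.
  by move: E; rewrite e1 e2 => /addrI/oppr_inj ->.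
have pm : ~~ (p %| m).
  apply: contra pN => pm; rewrite -cardCS expnSr mulnC -qE.
  by rewrite dvdn_mul.
have pq : p.-nat k.+1 by rewrite qE pnatX pnat_id.
have surj g : exists2 c, c \in C & (c *+ k.+1 - g)%R \in S := fix_count g pp pq tC pm.
pose psi (cs : 'I_N.+1 * 'I_N.+1) := (cs.1 *+ k.+1 - cs.2)%R.
have psiinj : {in setX C S &, injective psi}.
  apply/imset_injP; rewrite cardsX cS cardCS.
  have -> : psi @: setX C S = setT.
    apply/setP => g; rewrite inE; have [c cC cg] := surj g.
    by apply/imsetP; exists (c, (c *+ k.+1 - g)%R); rewrite ?inE ?cC //= /psi /= opprB addrC subrK.
  by rewrite cardsT card_ord.
have [s0 s0S] : exists s0, s0 \in S.
  by apply/set0Pn; rewrite -card_gt0 cS.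
have cI : #|[set (c *+ k.+1)%R | c in C]| = m.
  apply: card_in_imset => c c' cC c'C E.
  have := psiinj (c, s0) (c', s0); rewrite !inE cC c'C s0S /psi /= E.
  by move=> /(_ isT isT erefl) [].
have sIH : [set (c *+ k.+1)%R | c in C] \subset [set x : 'I_N.+1 | k.+1 %| x].
  apply/subsetP => _ /imsetP[c _ ->].
  by rewrite inE Zp_mulrn /= dvd_modN // dvdn_mull.
have cH : #|[set x : 'I_N.+1 | k.+1 %| x]| <= m.
  apply: (@leq_trans #|[set (inZp (val j * k.+1) : 'I_N.+1) | j : 'I_m]|).
    apply: subset_leq_card; apply/subsetP => x; rewrite inE => qx.
    have xm : x %/ k.+1 < m by rewrite ltn_divLR // cardCS.
    apply/imsetP; exists (Ordinal xm) => //; apply/val_inj.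
    by rewrite /= divnK // modn_small.
  by rewrite (leq_trans (leq_imset_card _ _)) // card_ord.
have EIH : [set (c *+ k.+1)%R | c in C] = [set x : 'I_N.+1 | k.+1 %| x].
  apply/eqP; rewrite eqEcard sIH /= cI //.
have HI (x : 'I_N.+1) : k.+1 %| x -> exists2 c, c \in C & x = (c *+ k.+1)%R.
  move=> qx; have : x \in [set x : 'I_N.+1 | k.+1 %| x] by rewrite inE.
  by rewrite -EIH => /imsetP[c cC ->]; exists c.
move=> s s' sS s'S ne E.
have [c0 c0C e0] := HI 0%R (dvdn0 _).
have [c1 c1C e1] : exists2 c, c \in C & (s' - s)%R = (c *+ k.+1)%R.
  apply: HI; rewrite -zsubE /zsub dvd_modN // /dvdn -modnDml -E modnDml.
  by rewrite subnKC ?(ltnW (ltn_ord s)).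
have : psi (c0, s) = psi (c1, s').
  by rewrite /psi /= -e0 -e1 addrAC subrr.
move/psiinj; rewrite !inE c0C c1C sS s'S => /(_ isT isT) [_ ess].
by rewrite ess eqxx in ne.
Qed.

Theorem theorem1p4 (n l p : nat) (S : {set 'I_n}) :
  0 < n -> 0 < l -> prime p ->
  p ^ l %| n -> ~~ (p ^ l.+1 %| n) ->
  (forall s : 'I_n, s \in S -> val s != 0) ->
  inv_closed S ->
  #|S| = p ^ l ->
  cay_connected S ->
  (exists C : {set 'I_n}, total_perfect_code S C) <->
  (forall s s' : 'I_n, s \in S -> s' \in S -> s != s' -> val s <> val s' %[mod p ^ l]).
Proof.
move: S; case: n => [|N] S // _ _ pp.
have q0 : 0 < p ^ l by rewrite expn_gt0 prime_gt0.
move=> + qnl; case Eq : (p ^ l) q0 => [|k] // _ qn _ _ cS _.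
split.
  by case=> C /tpc_tiling tC; exact: (forward pp (esym Eq) qn qnl cS tC).
by move=> H; exact: backward qn cS H.
Qed.
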